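(* Let $d \geq 3$ be odd. Then there exists a homogeneous form of degree $d$ in $3$ variables over $\mathbb{C}$ whose Waring rank is strictly greater than $((d+1)/2)^2$. Equivalently, $r_{\max}(3,d) > ((d+1)/2)^2$.
   Context: For a complex homogeneous form $F$ of degree $d$, the Waring rank $r(F)$ is the least $r$ such that there exist linear forms $\ell_1,\dots,\ell_r$ and scalars $c_1,\dots,c_r\in\mathbb{C}$ with $F = c_1\ell_1^d+\dots+c_r\ell_r^d$. $r_{\max}(n,d)$ denotes the maximum Waring rank among all homogeneous forms of degree $d$ in $n$ variables over $\mathbb{C}$. (The number $((d+1)/2)^2$ is the largest Waring rank of a monomial of odd degree $d$ in $3$ variables.) *)

(* Defs.v *)
From HB Require Import structures.
From mathcomp Require Import all_boot all_order all_algebra.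
Set Implicit Arguments. Unset Strict Implicit. Unset Printing Implicit Defensive.
Import Order.TTheory GRing.Theory Num.Theory.
Local Open Scope ring_scope.

Definition poly3 (C : nzRingType) := {poly {poly {poly C}}}.

Definition cst3 {C : nzRingType} (a : C) : poly3 C := (a%:P)%:P%:P.
Definition varX {C : nzRingType} : poly3 C := 'X.
Definition varY {C : nzRingType} : poly3 C := ('X)%:P.
Definition varZ {C : nzRingType} : poly3 C := (('X)%:P)%:P.

Definition mono3 {C : nzRingType} (i j k : nat) : poly3 C :=
  varX ^+ i * varY ^+ j * varZ ^+ k.

Definition is_form {C : nzRingType} (d : nat) (F : poly3 C) : Prop :=
  exists a : nat -> nat -> C,
    F = \sum_(i < d.+1) \sum_(j < (d - i).+1) cst3 (a i j) * mono3 i j (d - i - j).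

Definition linform {C : nzRingType} (l : C * C * C) : poly3 C :=
  cst3 l.1.1 * varX + cst3 l.1.2 * varY + cst3 l.2 * varZ.

Definition waring_decomp {C : nzRingType} (d : nat) (F : poly3 C) (r : nat) : Prop :=
  exists (c : 'I_r -> C) (l : 'I_r -> C * C * C),
    F = \sum_(k < r) cst3 (c k) * linform (l k) ^+ d.

Definition waring_rank_gt {C : nzRingType} (d : nat) (F : poly3 C) (m : nat) : Prop :=
  forall r, waring_decomp d F r -> (m < r)%N.

(* Main.v *)
Require Import Defs.
From HB Require Import structures.
From mathcomp Require Import all_boot all_order all_algebra.
From mathcomp Require Import zify ring.
From Stdlib Require Import Lia.
Import Order.TTheory GRing.Theory Num.Theory.
Local Open Scope ring_scope.


Lemma count_mx (F : fieldType) m n (A : 'M[F]_(m, n)) :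
  (forall v : 'rV_m, v *m A = 0 -> v = 0) -> (m <= n)%N.
Proof.
move=> H.
have rf : row_free A.
  rewrite -kermx_eq0; apply/eqP/row_matrixP => i.
  rewrite row0; apply: H; by rewrite -row_mul mulmx_ker row0.
by rewrite -(eqP rf) rank_leq_col.
Qed.

Lemma count_le (F : fieldType) (S I : finType) (T : {set I}) (A : S -> I -> F) :
  (forall g : S -> F, (forall t, t \in T -> \sum_s g s * A s t = 0) ->
     forall s, g s = 0) -> (#|S| <= #|T|)%N.
Proof.
move=> H.
pose M := \matrix_(i < #|S|, j < #|T|) A (enum_val i) (enum_val j).
apply: (@count_mx _ _ _ M) => v Hv.
pose g s := v 0 (enum_rank s).
have Hg : forall s, g s = 0.
  apply: H => t tT.
  transitivity ((v *m M) 0 (enum_rank_in tT t)); last by rewrite Hv mxE.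
  rewrite mxE (reindex (@enum_val S predT)) /=; last first.
    by exists enum_rank => x _; [rewrite enum_valK | rewrite enum_rankK].
  apply: eq_bigr => i _; rewrite /g enum_valK mxE enum_rankK_in //.
apply/rowP => i; rewrite mxE -(enum_valK i); exact: Hg.
Qed.

Definition coef3 {C : nzRingType} (P : poly3 C) i j m := ((P`_i)`_j)`_m.

Lemma coef3_mono (C : comNzRingType) i j m i' j' m' :
  coef3 (mono3 i j m : poly3 C) i' j' m' = ((i' == i) && (j' == j) && (m' == m))%:R.
Proof.
rewrite /coef3 /mono3 /varX /varY /varZ -!rmorphXn /= -mulrA -rmorphM /= mulrC coefCM coefXn.
case: (i' =P i) => [E|/eqP ne]; last by rewrite mulr0 !coef0.
rewrite mulr1 /= mulrC coefCM coefXn.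
case: (j' =P j) => [E'|/eqP ne]; last by rewrite mulr0 !coef0.
by rewrite mulr1 coefXn.
Qed.

Lemma coef3D (C : nzRingType) (P Q : poly3 C) i j m :
  coef3 (P + Q) i j m = coef3 P i j m + coef3 Q i j m.
Proof. by rewrite /coef3 !coefD. Qed.

Lemma coef3_sum (C : nzRingType) (I : finType) (F : I -> poly3 C) i j m :
  coef3 (\sum_k F k) i j m = \sum_k coef3 (F k) i j m.
Proof. by rewrite /coef3 !coef_sum. Qed.



Lemma coef_linpow (R : comNzRingType) (c q : R) n i :
  ((c%:P * 'X + q%:P) ^+ n)`_i = q ^+ (n - i) * c ^+ i *+ 'C(n, i).
Proof.
rewrite addrC exprDn coef_sum.
have E : forall j : 'I_n.+1, (q%:P ^+ (n - j) * (c%:P * 'X) ^+ j *+ 'C(n, j))`_i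
   = (q ^+ (n - j) * c ^+ j *+ 'C(n, j)) * (i == j)%:R.
  move=> j; rewrite exprMn -!rmorphXn /= mulrA -rmorphM /= coefMn coefCM coefXn.
  by rewrite mulrnAl.
under eq_bigr do rewrite E.
case: (ltnP i n.+1) => hi.
  rewrite (bigD1 (Ordinal hi)) //= eqxx mulr1 big1 ?addr0 // => j hj.
  rewrite (_ : (i == j) = false) ?mulr0 //.
  by apply/negbTE; apply: contra hj => /eqP eij; apply/eqP/val_inj.
rewrite big1; first by rewrite bin_small.
move=> j _; rewrite (_ : (i == j) = false) ?mulr0 //.
by apply/negbTE; apply/eqP => eij; move: (ltn_ord j); rewrite -eij ltnNge hi.
Qed.

Lemma linform_eq (C : comNzRingType) (a b e : C) :
  linform (a, b, e) = (a%:P%:P)%:P * 'X + ((b%:P)%:P * 'X + ((e%:P * 'X)%:P))%:P.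
Proof.
by rewrite /linform /cst3 /varX /varY /varZ /= -addrA !rmorphD /= !rmorphM.
Qed.

Lemma AC_aux (R : comNzRingType) (c E B A x y : R) :
  c * (E * (B * x) * (A * y)) = c * y * x * (A * B * E).
Proof. ring. Qed.

Lemma coef3_term (C : comNzRingType) (c a b e : C) d i j m :
  (i + j + m = d)%N ->
  coef3 (cst3 c * linform (a, b, e) ^+ d) i j m =
  c * (a ^+ i * b ^+ j * e ^+ m) *+ ('C(d, i) * 'C(d - i, j)).
Proof.
move=> hd.
rewrite /coef3 linform_eq /cst3 !coefCM coef_linpow.
rewrite -!rmorphXn /= coefMn coefMC coefMn.
rewrite (coefMC (a ^+ i)) coef_linpow coefMn -rmorphXn /= (coefMC (b ^+ j)).
rewrite exprMn -rmorphXn /= coefCM coefXn.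
have -> : m = (d - i - j)%N by rewrite -hd; lia.
rewrite eqxx mulr1 !mulrnAl !mulrnAr -!mulrnA mulnC.
suff -> : e ^+ (d - i - j) * b ^+ j * a ^+ i = a ^+ i * b ^+ j * e ^+ (d - i - j) by [].
by rewrite mulrC (mulrC (e ^+ _)) mulrA.
Qed.


Lemma single_sum (C : nzRingType) (S : finType) (g F : S -> C) s0 :
  (forall s, s != s0 -> g s != 0 -> F s = 0) ->
  \sum_s g s * F s = g s0 * F s0.
Proof.
move=> H; rewrite (bigD1 s0) //= big1 ?addr0 // => s hs.
by have [->|gs] := eqVneq (g s) 0; [rewrite mul0r | rewrite H ?mulr0].
Qed.

Lemma regular_top (C : fieldType) (n : nat) (k0 : C) (L : nat -> nat -> C)
  (S : finType) (u v : S -> nat) (g : S -> C) :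
  (0 < n)%N -> k0 != 0 ->
  (forall j m, (j + m <= n.*2)%N -> L j m = if (j == n.-1) && (m == n.+1) then k0 else 0) ->
  (forall s s', u s = u s' -> v s = v s' -> s = s') ->
  (forall p q, \sum_s g s * L (u s + p)%N (v s + q)%N = 0) ->
  forall s0, g s0 != 0 -> (u s0 <= n.-1)%N -> (v s0 <= n.+1)%N ->
  (forall s, g s != 0 -> (u s + v s <= u s0 + v s0)%N) -> False.
Proof.
move=> n0 k0n HL inj Hs s0 gs0 hu hv hmax.
have := Hs (n.-1 - u s0)%N (n.+1 - v s0)%N.
rewrite (@single_sum _ _ _ _ s0); last first.
  move=> s ss0 gs; rewrite HL; last by have := hmax s gs; lia.
  case: ifP => // /andP [/eqP h1 /eqP h2].
  by move: ss0; rewrite (inj s s0) ?eqxx //; lia.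
rewrite HL; last by lia.
have -> : (u s0 + (n.-1 - u s0) == n.-1)%N && (v s0 + (n.+1 - v s0) == n.+1)%N.
  by apply/andP; split; apply/eqP; lia.
by move/eqP; rewrite mulf_eq0 (negbTE gs0) (negbTE k0n).
Qed.

Lemma caseA (C : fieldType) (n : nat) (k0 : C) (L : nat -> nat -> C)
  (g : 'I_n * 'I_n.+2 -> C) :
  (0 < n)%N -> k0 != 0 ->
  (forall j m, (j + m <= n.*2)%N -> L j m = if (j == n.-1) && (m == n.+1) then k0 else 0) ->
  (forall p q, \sum_s g s * L (s.1 + p)%N (s.2 + q)%N = 0) ->
  forall s, g s = 0.
Proof.
move=> n0 k0n HL Hs s; apply/eqP/negP => /negP gs.
case: (@arg_maxnP _ s (fun s => g s != 0) (fun s : 'I_n * 'I_n.+2 => (s.1 + s.2)%N) gs) => s0 gs0 hmax.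
apply: (@regular_top C n k0 L _ (fun s => val s.1) (fun s => val s.2) g n0 k0n HL _ Hs s0 gs0).
- by move=> [a b] [a' b'] /= /val_inj -> /val_inj ->.
- by rewrite /= -ltnS prednK // ltn_ord.
- by rewrite /= -ltnS ltn_ord.
- by move=> s' gs'; exact: hmax.
Qed.

Definition isreg {T : Type} (s : option (option T)) :=
  if s is Some (Some _) then true else false.

Definition uB n (ep : nat) (s : option (option ('I_n * 'I_n.+2))) : nat :=
  match s with None => n | Some None => (n.+1 - ep)%N | Some (Some x) => val x.1 end.
Definition vB n (ep : nat) (s : option (option ('I_n * 'I_n.+2))) : nat :=
  match s with None => 0%N | Some None => ep | Some (Some x) => val x.2 end.

Lemma caseB (C : fieldType) (n ep : nat) (k0 : C) (L : nat -> nat -> C)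
  (g : option (option ('I_n * 'I_n.+2)) -> C) :
  (0 < n)%N -> (ep <= 1)%N -> k0 != 0 ->
  (forall j m, (j + m <= n.*2)%N -> L j m = if (j == n.-1) && (m == n.+1) then k0 else 0) ->
  L (n.*2.+1 - ep)%N ep != 0 ->
  (forall p q, \sum_s g s * L (uB n ep s + p)%N (vB n ep s + q)%N = 0) ->
  forall s, g s = 0.
Proof.
move=> n0 ep1 k0n HL Ltop Hs s1; apply/eqP/negP => /negP gs1.
pose deg s := (uB n ep s + vB n ep s)%N.
pose Preg s := (g s != 0) && isreg s.
have inj : forall s s', uB n ep s = uB n ep s' -> vB n ep s = vB n ep s' -> s = s'.
  move=> [[[a b]|]|] [[[a' b']|]|] /=; try (by []);
  try (by move=> -> ->); try (by move=> h1 h2; have := ltn_ord a; lia);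
  try (by move=> h1 h2; have := ltn_ord a'; lia); try (by lia).
  by move=> /val_inj -> /val_inj ->.
have fallback : forall s0, Preg s0 ->
    (g (Some None) != 0 -> exists s, Preg s /\ (n.+1 <= deg s)%N) ->
    (g None != 0 -> exists s, Preg s /\ (n <= deg s)%N) -> False.
  move=> s0 Ps0 Hq HN.
  case: (@arg_maxnP _ s0 Preg deg Ps0) => sm Psm hmax.
  move: Psm hmax; case: sm => [[x|]|] /andP [gx] //= _ hmax.
  apply: (@regular_top C n k0 L _ (uB n ep) (vB n ep) g n0 k0n HL inj Hs _ gx).
  - by rewrite /= -ltnS prednK // ltn_ord.
  - by rewrite /= -ltnS ltn_ord.
  - move=> [[y|]|] gy.
    + by apply: (hmax (Some (Some y))); rewrite /Preg gy.
    + have [s' [Ps' ds']] := Hq gy.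
      have := hmax s' Ps'; move: ds'; rewrite /deg /=; lia.
    + have [s' [Ps' ds']] := HN gy.
      have := hmax s' Ps'; move: ds'; rewrite /deg /=; lia.
have [gq|gq] := eqVneq (g (Some None)) 0; last first.
  have [/existsP [s' /andP [Ps' ds']]|nex] := boolP [exists s, Preg s && (n.+1 <= deg s)%N].
    apply: (fallback s' Ps') => _; exists s'; split => //; lia.
  have := Hs n 0%N.
  rewrite (@single_sum _ _ _ _ (Some None)); last first.
    move=> [[x|]|] // _ gx; rewrite HL /=.
    - case: ifP => // /andP [/eqP h1 _]; lia.
    - have : ~~ (Preg (Some (Some x)) && (n.+1 <= deg (Some (Some x)))%N).
        by move/existsPn: nex; apply.
      rewrite /Preg gx /deg /= => h; lia.
    - case: ifP => // /andP [/eqP h1 _]; lia.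
    - lia.
  have -> : (uB n ep (Some None) + n = n.*2.+1 - ep)%N by rewrite /=; lia.
  rewrite addn0 /=; apply/eqP; by rewrite mulf_eq0 negb_or gq.
have [gN|gN] := eqVneq (g None) 0.
  move: gs1; case: s1 => [[x|]|] gx; last by rewrite gN eqxx in gx.
  - by apply: (fallback (Some (Some x))); rewrite ?gq ?gN ?eqxx // /Preg gx.
  - by rewrite gq eqxx in gx.
have [/existsP [s' /andP [Ps' ds']]|nex] := boolP [exists s, Preg s && (n <= deg s)%N].
  by apply: (fallback s' Ps'); rewrite ?gq ?eqxx // => _; exists s'.
have := Hs (n.+1 - ep)%N ep.
rewrite (@single_sum _ _ _ _ None); last first.
  move=> [[x|]|] // _ gx; last by rewrite gq eqxx in gx.
  rewrite HL /=.
  - case: ifP => // /andP [/eqP h1 _]; lia.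
  - have : ~~ (Preg (Some (Some x)) && (n <= deg (Some (Some x)))%N).
      by move/existsPn: nex; apply.
    rewrite /Preg gx /deg /= => h; lia.
have -> : (uB n ep None + (n.+1 - ep) = n.*2.+1 - ep)%N by rewrite /=; lia.
rewrite /= add0n; apply/eqP; by rewrite mulf_eq0 negb_or gN.
Qed.


Lemma mom_gen (C : fieldType) (S I : finType) (T : {set I}) (W B E : I -> C)
  (u v : S -> nat) (g : S -> C) :
  (forall t, t \in T -> \sum_s g s * (B t ^+ u s * E t ^+ v s) = 0) ->
  forall p q, \sum_s g s * (\sum_(t in T) W t * (B t ^+ (u s + p) * E t ^+ (v s + q))) = 0.
Proof.
move=> H p q.
under eq_bigr do rewrite mulr_sumr.
rewrite exchange_big /=; apply: big1 => t tT.
transitivity (W t * B t ^+ p * E t ^+ q * \sum_s g s * (B t ^+ u s * E t ^+ v s)).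
  rewrite mulr_sumr; apply: eq_bigr => s _; rewrite !exprD.
  ring.
by rewrite H // mulr0.
Qed.

Lemma Lam_eq (C : fieldType) (I : finType) (T : {set I}) (c a b e : I -> C) d j m :
  (forall t, t \in T -> a t != 0) -> (j + m <= d)%N ->
  \sum_(t in T) (c t * a t ^+ d) * ((b t / a t) ^+ j * (e t / a t) ^+ m)
  = \sum_(t in T) c t * (a t ^+ (d - j - m) * b t ^+ j * e t ^+ m).
Proof.
move=> Ha hd; apply: eq_bigr => t tT.
have at0 := Ha t tT.
have -> : a t ^+ d = a t ^+ (d - j - m) * a t ^+ j * a t ^+ m.
  by rewrite -!exprD; congr (_ ^+ _); lia.
rewrite !expr_div_n.
field.
by rewrite !expf_neq0.
Qed.

Lemma Lam_full (C : fieldType) (I : finType) (c a f : I -> C) i :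
  (0 < i)%N ->
  \sum_(t in [set t | a t != 0]) c t * (a t ^+ i * f t) = \sum_t c t * (a t ^+ i * f t).
Proof.
move=> hi; rewrite big_mkcond; apply: eq_bigr => t _; rewrite inE.
case: eqP => // ->; rewrite expr0n. have -> : (i == 0%N) = false by lia. by rewrite mul0r mulr0.
Qed.


Lemma main_count (C : fieldType) (n r : nat) (c a b e : 'I_r -> C) (k0 k1 : C) :
  (0 < n)%N -> k0 != 0 -> k1 != 0 ->
  (forall i j m, (i + j + m = n.*2.+1)%N ->
     \sum_t c t * (a t ^+ i * b t ^+ j * e t ^+ m) =
     if (i == 1%N) && (j == n.-1) && (m == n.+1) then k0
     else if (i == 0%N) && (j == n.*2) && (m == 1%N) then k1 else 0) ->
  (n.+1 ^ 2 < r)%N.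
Proof.
move=> n0 k0n k1n Hmu.
set d := n.*2.+1.
pose T := [set t | a t != 0].
have HT : forall t, t \in T -> a t != 0 by move=> t; rewrite inE.
pose Lam j m := \sum_(t in T) (c t * a t ^+ d) * ((b t / a t) ^+ j * (e t / a t) ^+ m).
have HL : forall j m, (j + m <= n.*2)%N ->
    Lam j m = if (j == n.-1) && (m == n.+1) then k0 else 0.
  move=> j m hjm; rewrite /Lam Lam_eq //; last by rewrite /d; lia.
  under eq_bigr do rewrite -mulrA.
  rewrite Lam_full; last by rewrite /d; lia.
  under eq_bigr do rewrite (mulrA (a _ ^+ _)).
  rewrite Hmu; last by rewrite /d; lia.
  have -> : (d - j - m == 0)%N = false by rewrite /d; lia.
  case: (j =P n.-1) => [hj|hj]; case: (m =P n.+1) => [hm|hm] /=.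
  - by have -> : (d - j - m == 1)%N by rewrite /d; lia.
  - by rewrite andbF.
  - by rewrite andbF.
  - by rewrite andbF.
have split : forall f : 'I_r -> C, \sum_t f t = \sum_(t in T) f t + \sum_(t in ~: T) f t.
  move=> f; rewrite (bigID (mem T)) /=; congr (_ + _); apply: eq_bigl => t; by rewrite ?inE.
have Htop : forall j m, (j + m = d)%N ->
    Lam j m = (if (j == n.*2) && (m == 1%N) then k1 else 0)
              - \sum_(t in ~: T) c t * (a t ^+ 0 * b t ^+ j * e t ^+ m).
  move=> j m hjm; rewrite /Lam Lam_eq //; last by lia.
  have -> : (d - j - m = 0)%N by lia.
  rewrite -(Hmu 0%N j m); last by lia.
  by rewrite split addrK.
have cnt : forall (S : finType) (u v : S -> nat),
   (forall g : S -> C, (forall p q, \sum_s g s * Lam (u s + p)%N (v s + q)%N = 0) ->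
      forall s, g s = 0) -> (#|S| <= #|T|)%N.
  move=> S u v H.
  apply: (@count_le C S _ T (fun s t => (b t / a t) ^+ u s * (e t / a t) ^+ v s)) => g Hg.
  apply: H => p q; exact: (@mom_gen C S _ T (fun t => c t * a t ^+ d) _ _ u v g Hg p q).
have hr : (#|T| + #|~: T| = r)%N by rewrite cardsC card_ord.
have [h2|h1] := leqP 2 #|~: T|.
  have := cnt _ (fun s : 'I_n * 'I_n.+2 => val s.1) (fun s => val s.2)
     (fun g Hs => @caseA C n k0 Lam g n0 k0n HL Hs).
  rewrite card_prod !card_ord => h; nia.
have [ep [ep1 hep]] : exists ep, (ep <= 1)%N /\ Lam (n.*2.+1 - ep)%N ep != 0.
  have Hd1 : (n.*2.+1 - 1 = n.*2)%N by lia.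
  have [h0|h0] := eqVneq #|~: T| 0%N.
    exists 1%N; split => //; rewrite Hd1 Htop; last by rewrite /d; lia.
    by rewrite eqxx /= (cards0_eq h0) big_set0 subr0.
  have /cards1P [t0 Et0] : #|~: T| == 1%N by rewrite eqn_leq -ltnS h1 lt0n h0.
  have at0 : a t0 = 0.
    have : t0 \in ~: T by rewrite Et0 set11.
    by rewrite !inE negbK => /eqP.
  have [cb|cb] := eqVneq (c t0 * b t0 ^+ d) 0.
    exists 1%N; split => //; rewrite Hd1 Htop; last by rewrite /d; lia.
    rewrite eqxx /= Et0 big_set1 expr0 mul1r.
    move/eqP: cb; rewrite mulf_eq0 => /orP [/eqP -> | /eqP]; first by rewrite mul0r subr0.
    move/eqP; rewrite expf_eq0 => /andP [_ /eqP ->].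
    by rewrite expr0n (_ : (n.*2 == 0%N) = false) ?mul0r ?mulr0 ?subr0 //; lia.
  exists 0%N; split => //; rewrite subn0 Htop; last by rewrite /d; lia.
  rewrite (_ : (n.*2.+1 == n.*2) = false) /=; last by lia.
  rewrite Et0 big_set1 expr0 mul1r expr0 mulr1 sub0r oppr_eq0.
  exact: cb.
have := cnt _ (uB n ep) (vB n ep) (fun g Hs => @caseB C n ep k0 Lam g n0 ep1 k0n HL hep Hs).
rewrite !card_option card_prod !card_ord => h; nia.
Qed.


Lemma cst3D (C : nzRingType) (x y : C) : cst3 (x + y) = cst3 x + cst3 y.
Proof. by rewrite /cst3 !rmorphD. Qed.

Lemma cst3_nat (C : nzRingType) (b : bool) : cst3 (b%:R : C) = b%:R.
Proof. by case: b; rewrite /cst3 /= ?rmorph1 ?rmorph0. Qed.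

Lemma single2 (C : comNzRingType) D i0 j0 : (i0 <= D)%N -> (j0 <= D - i0)%N ->
  \sum_(i < D.+1) \sum_(j < (D - i).+1)
     cst3 ((((i : nat) == i0) && ((j : nat) == j0))%:R : C) * mono3 i j (D - i - j)
  = mono3 i0 j0 (D - i0 - j0).
Proof.
move=> hi hj.
have hi' : (i0 < D.+1)%N by lia.
rewrite (bigD1 (Ordinal hi')) //= [X in _ + X]big1 ?addr0; last first.
  move=> i ne; apply: big1 => j _.
  rewrite (_ : (i == i0 :> nat) = false) ?cst3_nat ?mul0r //.
  by apply/negbTE; apply: contra ne => /eqP e; apply/eqP/val_inj.
have hj' : (j0 < (D - i0).+1)%N by lia.
rewrite (bigD1 (Ordinal hj')) //= [X in _ + X]big1 ?addr0; last first.
  move=> j ne; rewrite eqxx /=.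
  rewrite (_ : (j == j0 :> nat) = false) ?cst3_nat ?mul0r //.
  by apply/negbTE; apply: contra ne => /eqP e; apply/eqP/val_inj.
by rewrite !eqxx cst3_nat mul1r.
Qed.

Lemma solve_mn (C : numFieldType) (x y : C) M : (0 < M)%N -> x *+ M = y -> x = y / M%:R.
Proof.
move=> hM <-; rewrite -[x *+ M]mulr_natr mulfK //.
by rewrite pnatr_eq0 -lt0n.
Qed.

Theorem theorem1 (C : numClosedFieldType) (d : nat) :
  (3 <= d)%N -> odd d ->
  exists F : poly3 C, is_form d F /\ waring_rank_gt d F (((d + 1) %/ 2) ^ 2)%N.
Proof.
move=> d3 dodd.
have [n hd n0] : exists2 n, d = n.*2.+1 & (0 < n)%N.
  exists d./2; last by rewrite -ltn_double -(leq_add2l (odd d)) odd_double_half; lia.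
  by rewrite -[LHS]odd_double_half dodd.
subst d.
have -> : ((n.*2.+1 + 1) %/ 2 = n.+1)%N.
  by rewrite addn1 -doubleS -mul2n mulKn.
exists (mono3 1 n.-1 n.+1 + mono3 0 n.*2 1).
split.
  exists (fun i j => ((i == 1%N) && (j == n.-1))%:R + ((i == 0%N) && (j == n.*2))%:R).
  under eq_bigr do under eq_bigr do rewrite cst3D mulrDl.
  under eq_bigr do rewrite big_split /=.
  rewrite big_split /= !single2 //; try lia.
  by congr (mono3 _ _ _ + mono3 _ _ _); lia.
move=> r [cc [l Hdec]].
pose a t := (l t).1.1; pose b t := (l t).1.2; pose e t := (l t).2.
have Hl : forall t, linform (l t) = linform (a t, b t, e t).
  by move=> t; rewrite /a /b /e; case: (l t) => [[x y] z].
set D := n.*2.+1.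
pose k0 : C := ('C(D, 1) * 'C(D - 1, n.-1))%:R^-1.
pose k1 : C := ('C(D, 0) * 'C(D - 0, n.*2))%:R^-1.
have Mpos : forall i j, (i + j <= D)%N -> (0 < 'C(D, i) * 'C(D - i, j))%N.
  by move=> i j hij; rewrite muln_gt0 !bin_gt0; apply/andP; split; lia.
apply: (@main_count C n r cc a b e k0 k1 n0).
- by rewrite /k0 invr_eq0 pnatr_eq0 -lt0n Mpos //; lia.
- by rewrite /k1 invr_eq0 pnatr_eq0 -lt0n Mpos //; lia.
move=> i j m hijm.
have E := congr1 (fun P => coef3 P i j m) Hdec.
rewrite /= coef3D !coef3_mono coef3_sum in E.
have E2 : \sum_k coef3 (cst3 (cc k) * linform (l k) ^+ n.*2.+1) i j m
   = (\sum_t cc t * (a t ^+ i * b t ^+ j * e t ^+ m)) *+ ('C(D, i) * 'C(D - i, j)).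
  by rewrite -sumrMnl; apply: eq_bigr => t _; rewrite Hl coef3_term.
rewrite E2 in E; move/esym: E => E.
have hM : (0 < 'C(D, i) * 'C(D - i, j))%N by apply: Mpos; rewrite /D; lia.
rewrite (@solve_mn _ _ _ _ hM E).
case: (i =P 1%N) => [hi|hi]; case: (j =P n.-1) => [hj|hj]; case: (m =P n.+1) => [hm|hm] /=.
all: try subst i; try subst j; try subst m; rewrite /= ?eqxx /=.
- by rewrite addr0 mul1r.
- by rewrite addr0 mul0r.
- by rewrite addr0 mul0r.
- by rewrite addr0 mul0r.
all: case: ifP => [H|_]; last by rewrite addr0 mul0r.
all: move/andP: H => [/andP [/eqP hi0 /eqP hj0] _]; subst i.
all: by rewrite hj0 add0r mul1r.
Qed.
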